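(* Let $P$ be a function-free program and $G$ a goal. If $EVR_L$ prunes every infinite SLD derivation of $G$ in $P$, independently of the selection rule used, then $EVR_L$ prunes every infinite RSLD derivation of $G$ in $P$.
   Context: Goals are finite lists of atoms; a clause is $h\leftarrow B$; a program is a finite set of clauses; function-free means no function symbols of positive arity occur. $N\subseteq_L G$ means $N$ is a subsequence of $G$, $G-N$ is the list of deleted atoms, $=_L$ is equality as lists. If $G=a_1,\dots,a_k$, $c=(h\leftarrow B)$, $\xi$ a renaming and $\theta$ an idempotent relevant mgu of $h\xi$ and some $a_i$, then $(a_1,\dots,a_{i-1},B\xi,a_{i+1},\dots,a_k)\theta$ is a resolvent. An SLD derivation of $G_0$ in $P$ is a finite or infinite sequence $G_0\xrightarrow{c_0\xi_0,\theta_0}G_1\xrightarrow{c_1\xi_1,\theta_1}\cdots$ of such steps with $c_j\in P$ and $var(c_j\xi_j)\cap(var(G_0)\cup var(c_0\xi_0)\cup\dots\cup var(c_{j-1}\xi_{j-1}))=\emptyset$. Reduced goal: $G>>^{\tau}N$ up to variable set $X$ if (i) $N\subseteq_L G$, (ii) for each atom $b$ of $G-N$, $b\tau$ occurs in $N$, (iii) $x\tau=x$ for all $x\in var(N)\cup X$. RSLD derivation: $G_0>>^{\alpha_0}N_0\xrightarrow{c_0\xi_0,\theta_0}G_1>>^{\alpha_1}N_1\xrightarrow{c_1\xi_1,\theta_1}G_2\cdots$ where each $N_j\xrightarrow{c_j\xi_j,\theta_j}G_{j+1}$ is an SLD step with $c_j\in P$ and the standardisation-apart condition above, and $G_j>>^{\alpha_j}N_j$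 up to $var(G_0\theta_0\cdots\theta_{j-1})$. (An SLD derivation is the special case $N_j=G_j$.) $EVR_L$ check: an RSLD derivation is pruned by $EVR_L$ if there exist $0\le i<j$ and a renaming $\tau$ with $G_0\theta_0\cdots\theta_{j-1}=G_0\theta_0\cdots\theta_{i-1}\tau$ and $N_j=_L N_i\tau$. *)

(* Defs.v *)
From Stdlib Require Import List.
Import ListNotations.

(* Terms may in general contain function symbols of
   any arity; "function-free" is a predicate below. *)
Definition var := nat.

Inductive term : Type :=
| Var : var -> term
| Fn : nat -> list term -> term.

Record atom : Type := mkAtom { apred : nat ; aargs : list term }.

Definition goal := list atom.

Record clause : Type := mkClause { chead : atom ; cbody : list atom }.

Definition program := list clause.

Fixpoint tvars (t : term) : list var :=
  match t with
  | Var x => [x]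
  | Fn _ ts => (fix go (l : list term) : list var :=
                  match l with [] => [] | u :: l' => tvars u ++ go l' end) ts
  end.

Definition avars (a : atom) : list var := flat_map tvars (aargs a).
Definition gvars (g : goal) : list var := flat_map avars g.
Definition cvars (c : clause) : list var := avars (chead c) ++ gvars (cbody c).

Definition ff_term (t : term) : Prop :=
  match t with Var _ => True | Fn _ ts => ts = [] end.
Definition ff_atom (a : atom) : Prop := Forall ff_term (aargs a).
Definition ff_goal (g : goal) : Prop := Forall ff_atom g.
Definition ff_clause (c : clause) : Prop := ff_atom (chead c) /\ ff_goal (cbody c).
Definition ff_program (P : program) : Prop := Forall ff_clause P.

Definition subst := var -> term.

Fixpoint tsubst (s : subst) (t : term) : term :=
  match t with
  | Var x => s x
  | Fn f ts => Fn f (map (tsubst s) ts)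
  end.

Definition asubst (s : subst) (a : atom) : atom :=
  mkAtom (apred a) (map (tsubst s) (aargs a)).
Definition gsubst (s : subst) (g : goal) : goal := map (asubst s) g.
Definition csubst (s : subst) (c : clause) : clause :=
  mkClause (asubst s (chead c)) (gsubst s (cbody c)).

Definition renaming (s : subst) : Prop :=
  exists (f g : var -> var) (supp : list var),
    (forall x, g (f x) = x) /\ (forall x, f (g x) = x) /\
    (forall x, ~ In x supp -> f x = x) /\
    (forall x, s x = Var (f x)).

Definition unifier (th : subst) (a1 a2 : atom) : Prop :=
  asubst th a1 = asubst th a2.

Definition mgu (th : subst) (a1 a2 : atom) : Prop :=
  unifier th a1 a2 /\
  forall sg, unifier sg a1 a2 ->
    exists dl : subst, forall x, sg x = tsubst dl (th x).

Definition idempotent (th : subst) : Prop :=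
  forall x, tsubst th (th x) = th x.

Definition relevant (th : subst) (a1 a2 : atom) : Prop :=
  forall x, th x <> Var x ->
    (In x (avars a1 ++ avars a2)) /\
    (forall y, In y (tvars (th x)) -> In y (avars a1 ++ avars a2)).

Definition resolvent (G : goal) (c : clause) (xi th : subst) (G' : goal) : Prop :=
  renaming xi /\
  exists (pre : goal) (a : atom) (post : goal),
    G = pre ++ a :: post /\
    mgu th (asubst xi (chead c)) a /\ idempotent th /\
    relevant th (asubst xi (chead c)) a /\
    G' = gsubst th (pre ++ gsubst xi (cbody c) ++ post).

Definition std_apart (G0 : goal) (c : nat -> clause) (xi : nat -> subst) (j : nat) : Prop :=
  forall x, In x (cvars (csubst (xi j) (c j))) ->
    ~ In x (gvars G0) /\
    (forall k, k < j -> ~ In x (cvars (csubst (xi k) (c k)))).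

Fixpoint inst_upto (G0 : goal) (th : nat -> subst) (j : nat) : goal :=
  match j with
  | O => G0
  | S j' => gsubst (th j') (inst_upto G0 th j')
  end.

Definition inf_SLD (P : program) (G0 : goal) (Gs : nat -> goal)
    (c : nat -> clause) (xi th : nat -> subst) : Prop :=
  Gs 0 = G0 /\
  forall j, In (c j) P /\ std_apart G0 c xi j /\
            resolvent (Gs j) (c j) (xi j) (th j) (Gs (S j)).

Inductive sublist : goal -> goal -> goal -> Prop :=
| sl_nil : sublist [] [] []
| sl_keep : forall a N G D, sublist N G D -> sublist (a :: N) (a :: G) D
| sl_drop : forall a N G D, sublist N G D -> sublist N (a :: G) (a :: D).

Definition reduced (G : goal) (tau : subst) (N : goal) (X : list var) : Prop :=
  exists D, sublist N G D /\
    (forall b, In b D -> In (asubst tau b) N) /\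
    (forall x, In x (gvars N) \/ In x X -> tau x = Var x).

Definition inf_RSLD (P : program) (G0 : goal) (Gs Ns : nat -> goal)
    (al : nat -> subst) (c : nat -> clause) (xi th : nat -> subst) : Prop :=
  Gs 0 = G0 /\
  forall j, reduced (Gs j) (al j) (Ns j) (gvars (inst_upto G0 th j)) /\
            In (c j) P /\ std_apart G0 c xi j /\
            resolvent (Ns j) (c j) (xi j) (th j) (Gs (S j)).

Definition EVR_L_prunes (G0 : goal) (th : nat -> subst) (Ns : nat -> goal) : Prop :=
  exists i j tau, i < j /\ renaming tau /\
    inst_upto G0 th j = gsubst tau (inst_upto G0 th i) /\
    Ns j = gsubst tau (Ns i).

(* Main.v *)
Require Import Defs.
From Stdlib Require Import List Arith Lia Classical ClassicalEpsilon FunctionalExtensionality.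
Import ListNotations.

Lemma term_ind' (P : term -> Prop) :
  (forall x, P (Var x)) ->
  (forall f ts, Forall P ts -> P (Fn f ts)) -> forall t, P t.
Proof.
  intros HV HF. fix IH 1. intros [x|f ts]. apply HV. apply HF.
  revert ts. fix IHl 1. intros [|u ts]. constructor. constructor. apply IH. apply IHl.
Qed.

Lemma tvars_Fn f ts : tvars (Fn f ts) = flat_map tvars ts.
Proof. simpl. induction ts; simpl; [reflexivity| f_equal; exact IHts]. Qed.

Definition scomp (s2 s1 : subst) : subst := fun x => tsubst s2 (s1 x).

Lemma tsubst_comp s2 s1 t : tsubst s2 (tsubst s1 t) = tsubst (scomp s2 s1) t.
Proof.
  induction t as [x|f ts IH] using term_ind'; simpl; auto.
  f_equal. rewrite map_map. apply map_ext_in. intros u Hu.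
  rewrite Forall_forall in IH. auto.
Qed.

Lemma tsubst_ext s1 s2 t : (forall x, In x (tvars t) -> s1 x = s2 x) ->
  tsubst s1 t = tsubst s2 t.
Proof.
  induction t as [x|f ts IH] using term_ind'; intros H; simpl.
  - apply H. simpl; auto.
  - f_equal. apply map_ext_in. intros u Hu. rewrite Forall_forall in IH.
    apply IH; auto. intros x Hx. apply H. rewrite tvars_Fn. apply in_flat_map. eauto.
Qed.

Lemma tvars_tsubst s t y : In y (tvars (tsubst s t)) <->
  exists x, In x (tvars t) /\ In y (tvars (s x)).
Proof.
  induction t as [x|f ts IH] using term_ind'.
  - simpl. split. intros H; exists x; simpl; auto. intros [x' [[<-|[]] H]]; auto.
  - cbn [tsubst]. rewrite tvars_Fn, in_flat_map. rewrite Forall_forall in IH. split.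
    + intros [u [Hu Hy]]. apply in_map_iff in Hu as [v [<- Hv]].
      apply IH in Hy as [x [Hx Hy]]; auto. exists x; split; auto.
      rewrite tvars_Fn, in_flat_map. eauto.
    + intros [x [Hx Hy]]. rewrite tvars_Fn, in_flat_map in Hx. destruct Hx as [v [Hv Hx]].
      exists (tsubst s v). split. apply in_map; auto. apply IH; eauto.
Qed.

Lemma gvars_app g1 g2 : gvars (g1 ++ g2) = gvars g1 ++ gvars g2.
Proof. unfold gvars. apply flat_map_app. Qed.

Lemma gvars_cons a g : gvars (a :: g) = avars a ++ gvars g.
Proof. reflexivity. Qed.

Lemma gsubst_app s g1 g2 : gsubst s (g1 ++ g2) = gsubst s g1 ++ gsubst s g2.
Proof. apply map_app. Qed.

Lemma asubst_comp s2 s1 a : asubst s2 (asubst s1 a) = asubst (scomp s2 s1) a.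
Proof. unfold asubst; simpl. f_equal. rewrite map_map. apply map_ext. intros; apply tsubst_comp. Qed.

Lemma gsubst_comp s2 s1 g : gsubst s2 (gsubst s1 g) = gsubst (scomp s2 s1) g.
Proof. unfold gsubst. rewrite map_map. apply map_ext. intros; apply asubst_comp. Qed.

Lemma asubst_ext s1 s2 a : (forall x, In x (avars a) -> s1 x = s2 x) -> asubst s1 a = asubst s2 a.
Proof.
  intros H. unfold asubst. f_equal. apply map_ext_in. intros t Ht. apply tsubst_ext.
  intros x Hx. apply H. unfold avars. apply in_flat_map; eauto.
Qed.

Lemma gsubst_ext s1 s2 g : (forall x, In x (gvars g) -> s1 x = s2 x) -> gsubst s1 g = gsubst s2 g.
Proof.
  intros H. unfold gsubst. apply map_ext_in. intros a Ha. apply asubst_ext.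
  intros x Hx. apply H. unfold gvars. apply in_flat_map; eauto.
Qed.

Lemma avars_asubst s a y : In y (avars (asubst s a)) <->
  exists x, In x (avars a) /\ In y (tvars (s x)).
Proof.
  unfold avars, asubst; simpl. rewrite in_flat_map. split.
  - intros [u [Hu Hy]]. apply in_map_iff in Hu as [v [<- Hv]].
    apply tvars_tsubst in Hy as [x [Hx Hy]]. exists x; split; auto. apply in_flat_map; eauto.
  - intros [x [Hx Hy]]. apply in_flat_map in Hx as [v [Hv Hx]]. exists (tsubst s v).
    split. apply in_map; auto. apply tvars_tsubst; eauto.
Qed.

Lemma gvars_gsubst s g y : In y (gvars (gsubst s g)) <->
  exists x, In x (gvars g) /\ In y (tvars (s x)).
Proof.
  unfold gvars, gsubst. rewrite in_flat_map. split.
  - intros [u [Hu Hy]]. apply in_map_iff in Hu as [v [<- Hv]].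
    apply avars_asubst in Hy as [x [Hx Hy]]. exists x; split; auto. apply in_flat_map; eauto.
  - intros [x [Hx Hy]]. apply in_flat_map in Hx as [v [Hv Hx]]. exists (asubst s v).
    split. apply in_map; auto. apply avars_asubst; eauto.
Qed.

Lemma tsubst_var t : tsubst Var t = t.
Proof.
  induction t as [x|f ts IH] using term_ind'; simpl; auto. f_equal.
  rewrite Forall_forall in IH. rewrite <- (map_id ts) at 2. apply map_ext_in; auto.
Qed.

Lemma gsubst_var g : gsubst Var g = g.
Proof.
  unfold gsubst. rewrite <- (map_id g) at 2. apply map_ext. intros [p ts]. unfold asubst; simpl.
  f_equal. rewrite <- (map_id ts) at 2. apply map_ext. apply tsubst_var.
Qed.

Record ren := { rf : var -> var; rg : var -> var; rsupp : list var;
  rgf : forall x, rg (rf x) = x; rfg : forall x, rf (rg x) = x;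
  rsup : forall x, ~ In x rsupp -> rf x = x }.

Definition rs (r : ren) : subst := fun x => Var (rf r x).

Lemma ren_renaming r : renaming (rs r).
Proof. exists (rf r), (rg r), (rsupp r). split; [|split; [|split]]; intros; auto using rgf, rfg, rsup. Qed.

Lemma renaming_ren s : renaming s -> exists r, s = rs r.
Proof.
  intros [f [g [supp [H1 [H2 [H3 H4]]]]]].
  exists (Build_ren f g supp H1 H2 H3). apply functional_extensionality. intros x. apply H4.
Qed.

Program Definition rcomp (r2 r1 : ren) : ren :=
  {| rf := fun x => rf r2 (rf r1 x); rg := fun x => rg r1 (rg r2 x);
     rsupp := rsupp r1 ++ rsupp r2 |}.
Next Obligation. rewrite !rgf; auto. Qed.
Next Obligation. rewrite !rfg; auto. Qed.
Next Obligation. rewrite in_app_iff in H. rewrite (rsup r1 x); [rewrite (rsup r2 x)|]; auto. Qed.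

Program Definition rinv (r : ren) : ren :=
  {| rf := rg r; rg := rf r; rsupp := rsupp r |}.
Next Obligation. apply rfg. Qed.
Next Obligation. apply rgf. Qed.
Next Obligation. rewrite <- (rsup r x H) at 1. apply rgf. Qed.

Program Definition rid : ren := {| rf := fun x => x; rg := fun x => x; rsupp := [] |}.

Lemma rs_comp r2 r1 : scomp (rs r2) (rs r1) = rs (rcomp r2 r1).
Proof. reflexivity. Qed.

Lemma gsubst_rinv r g : gsubst (rs (rinv r)) (gsubst (rs r) g) = g.
Proof.
  rewrite gsubst_comp. rewrite <- (gsubst_var g) at 2. apply gsubst_ext.
  intros x _. unfold scomp, rs; simpl. rewrite rgf. reflexivity.
Qed.

Lemma gsubst_rinv' r g : gsubst (rs r) (gsubst (rs (rinv r)) g) = g.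
Proof.
  rewrite gsubst_comp. rewrite <- (gsubst_var g) at 2. apply gsubst_ext.
  intros x _. unfold scomp, rs; simpl. rewrite rfg. reflexivity.
Qed.

Lemma gvars_ren r g y : In y (gvars (gsubst (rs r) g)) <-> exists x, In x (gvars g) /\ y = rf r x.
Proof.
  rewrite gvars_gsubst. unfold rs; simpl. split.
  intros [x [Hx [<-|[]]]]; eauto. intros [x [Hx ->]]; eauto.
Qed.

Definition sw (a b z : var) : var :=
  if Nat.eq_dec z a then b else if Nat.eq_dec z b then a else z.

Lemma sw_inv a b z : sw a b (sw a b z) = z.
Proof.
  unfold sw. destruct (Nat.eq_dec z a); destruct (Nat.eq_dec z b); subst;
  repeat (destruct Nat.eq_dec; subst; try congruence); auto.
Qed.

Program Definition rswap (a b : var) : ren :=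
  {| rf := sw a b; rg := sw a b; rsupp := [a; b] |}.
Next Obligation. apply sw_inv. Qed.
Next Obligation. apply sw_inv. Qed.
Next Obligation. unfold sw. simpl in H.
  destruct Nat.eq_dec; [exfalso; auto|]. destruct Nat.eq_dec; [exfalso; auto|]. auto. Qed.

Lemma ren_inj r x y : rf r x = rf r y -> x = y.
Proof. intros H. rewrite <- (rgf r x), <- (rgf r y), H. auto. Qed.

Lemma ren_extend (ps : list (var*var)) : NoDup (map fst ps) -> NoDup (map snd ps) ->
  exists r, forall p, In p ps -> rf r (fst p) = snd p.
Proof.
  induction ps as [|[x y] ps IH]; simpl; intros H1 H2.
  - exists rid. intros _ [].
  - inversion H1 as [|? ? Hx1 Hx2]; inversion H2 as [|? ? Hy1 Hy2]; subst. destruct IH as [r Hr]; auto.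
    exists (rcomp (rswap y (rf r x)) r). intros [x' y'] [E|Hin]; simpl.
    + inversion E; subst. unfold sw. destruct Nat.eq_dec. auto.
      destruct Nat.eq_dec; congruence.
    + pose proof (Hr _ Hin) as E; simpl in E. rewrite E. unfold sw.
      destruct Nat.eq_dec as [e0|]. exfalso. apply Hy1. rewrite <- e0. apply in_map_iff. exists (x', y'); auto.
      destruct Nat.eq_dec as [e1|]; auto. exfalso. rewrite <- E in e1. apply ren_inj in e1.
      apply Hx1. rewrite <- e1. apply in_map_iff. exists (x', y'); auto.
Qed.

Definition conj (r : ren) (th : subst) : subst := fun x => tsubst (rs r) (th (rg r x)).

Lemma tsubst_rinv r u : tsubst (rs (rinv r)) (tsubst (rs r) u) = u.
Proof.
  rewrite tsubst_comp. rewrite <- (tsubst_var u) at 2. apply tsubst_ext.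
  intros x _. unfold scomp, rs; simpl. rewrite rgf. reflexivity.
Qed.

Lemma conj_tsubst r th t : tsubst (conj r th) (tsubst (rs r) t) = tsubst (rs r) (tsubst th t).
Proof.
  rewrite !tsubst_comp. apply tsubst_ext. intros x _. unfold scomp, conj, rs; simpl.
  rewrite rgf. reflexivity.
Qed.

Lemma conj_asubst r th a : asubst (conj r th) (asubst (rs r) a) = asubst (rs r) (asubst th a).
Proof. unfold asubst; simpl. f_equal. rewrite !map_map. apply map_ext. apply conj_tsubst. Qed.

Lemma conj_gsubst r th g : gsubst (conj r th) (gsubst (rs r) g) = gsubst (rs r) (gsubst th g).
Proof. unfold gsubst. rewrite !map_map. apply map_ext. apply conj_asubst. Qed.

Lemma mgu_conj r th a1 a2 : mgu th a1 a2 -> mgu (conj r th) (asubst (rs r) a1) (asubst (rs r) a2).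
Proof.
  intros [Hu Hg]. split.
  - unfold unifier. rewrite !conj_asubst. rewrite Hu. reflexivity.
  - intros sg Hsg. destruct (Hg (scomp sg (rs r))) as [dl Hdl].
    { unfold unifier in *. rewrite <- !asubst_comp. exact Hsg. }
    exists (scomp dl (rs (rinv r))). intros x. unfold conj.
    rewrite <- tsubst_comp, tsubst_rinv. rewrite <- Hdl. unfold scomp, rs; simpl.
    rewrite rfg. reflexivity.
Qed.

Lemma idem_conj r th : idempotent th -> idempotent (conj r th).
Proof.
  intros H x. unfold conj at 2. rewrite conj_tsubst, H. reflexivity.
Qed.

Lemma relevant_conj r th a1 a2 : relevant th a1 a2 ->
  relevant (conj r th) (asubst (rs r) a1) (asubst (rs r) a2).
Proof.
  intros H x Hx. unfold conj in *.
  assert (Hne : th (rg r x) <> Var (rg r x)).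
  { intros E. apply Hx. rewrite E. simpl. unfold rs. rewrite rfg. reflexivity. }
  destruct (H _ Hne) as [H1 H2].
  assert (Hin : forall z, In z (avars a1 ++ avars a2) ->
     In (rf r z) (avars (asubst (rs r) a1) ++ avars (asubst (rs r) a2))).
  { intros z Hz. apply in_app_iff in Hz as [Hz|Hz]; apply in_app_iff; [left|right];
    apply avars_asubst; exists z; split; auto; simpl; auto. }
  split.
  - rewrite <- (rfg r x). apply Hin. auto.
  - intros y Hy. apply tvars_tsubst in Hy as [z [Hz [Hy|[]]]]. subst y. apply Hin. auto.
Qed.

Definition good_term (Cs : list nat) (t : term) : Prop :=
  (exists x, t = Var x) \/ (exists c, In c Cs /\ t = Fn c []).
Definition good_atom Cs (a : atom) := Forall (good_term Cs) (aargs a).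
Definition good_goal Cs (g : goal) := Forall (good_atom Cs) g.

Definition abs (Cs : list nat) (t : term) : term :=
  match t with
  | Var x => Var x
  | Fn f [] => if in_dec Nat.eq_dec f Cs then Fn f [] else Var 0
  | Fn _ _ => Var 0
  end.

Lemma abs_tsubst Cs th t : good_term Cs t ->
  abs Cs (tsubst th t) = tsubst (fun x => abs Cs (th x)) t.
Proof.
  intros [[x ->]|[c [Hc ->]]]; simpl; auto.
  destruct in_dec; tauto.
Qed.

Lemma mgu_good Cs th a1 a2 : good_atom Cs a1 -> good_atom Cs a2 -> mgu th a1 a2 ->
  forall x, good_term Cs (th x).
Proof.
  intros G1 G2 [Hu Hg] x.
  destruct (Hg (fun x => abs Cs (th x))) as [dl Hdl].
  { unfold unifier, asubst in *. injection Hu as Hp Hm. simpl. f_equal; auto.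
    transitivity (map (abs Cs) (map (tsubst th) (aargs a1))).
    - rewrite map_map. apply map_ext_in. intros t Ht. symmetry. apply abs_tsubst.
      unfold good_atom in G1. rewrite Forall_forall in G1. auto.
    - rewrite Hm. rewrite map_map. apply map_ext_in. intros t Ht. apply abs_tsubst.
      unfold good_atom in G2. rewrite Forall_forall in G2. auto. }
  specialize (Hdl x). destruct (th x) as [y|f ts] eqn:E.
  - left; eauto.
  - simpl in Hdl. destruct ts.
    + destruct in_dec. right; eauto. discriminate.
    + discriminate.
Qed.

Lemma good_tsubst Cs th t : (forall x, good_term Cs (th x)) -> good_term Cs t ->
  good_term Cs (tsubst th t).
Proof. intros H [[x ->]|[c [Hc ->]]]; simpl; auto. right; eauto. Qed.

Lemma good_asubst Cs th a : (forall x, good_term Cs (th x)) -> good_atom Cs a ->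
  good_atom Cs (asubst th a).
Proof.
  intros H Ha. unfold good_atom, asubst in *; simpl. rewrite Forall_forall in *.
  intros t Ht. apply in_map_iff in Ht as [u [<- Hu]]. apply good_tsubst; auto.
Qed.

Lemma good_gsubst Cs th g : (forall x, good_term Cs (th x)) -> good_goal Cs g ->
  good_goal Cs (gsubst th g).
Proof.
  intros H Hg. unfold good_goal, gsubst in *. rewrite Forall_forall in *.
  intros a Ha. apply in_map_iff in Ha as [u [<- Hu]]. apply good_asubst; auto.
Qed.

Lemma good_rs Cs r x : good_term Cs (rs r x).
Proof. left; unfold rs; eauto. Qed.

Lemma app_len_inv {X} (l1 l2 l3 l4 : list X) : l1 ++ l2 = l3 ++ l4 -> length l1 = length l3 ->
  l1 = l3 /\ l2 = l4.
Proof.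
  revert l3; induction l1 as [|a l1 IH]; intros [|b l3] E L; simpl in *; try discriminate; auto.
  injection E as -> E. injection L as L. destruct (IH _ E L). subst; auto.
Qed.

Lemma pigeon {X} (U : list X) (f : nat -> X) : (forall i, In (f i) U) ->
  exists i j, i < j /\ f i = f j.
Proof.
  intros H. apply NNPP. intros Hn.
  assert (ND : NoDup (map f (seq 0 (S (length U))))).
  { apply NoDup_map_NoDup_ForallPairs; [|apply seq_NoDup].
    intros a b Ha Hb E. destruct (lt_eq_lt_dec a b) as [[L|L]|L]; auto;
    exfalso; apply Hn; eauto. }
  apply NoDup_incl_length with (l' := U) in ND.
  - rewrite length_map, length_seq in ND. lia.
  - intros x Hx. apply in_map_iff in Hx as [i [<- _]]. auto.
Qed.

Fixpoint lists_upto {X} (n : nat) (U : list X) : list (list X) :=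
  match n with
  | 0 => [[]]
  | S n => [] :: flat_map (fun x => map (cons x) (lists_upto n U)) U
  end.

Lemma lists_upto_in {X} n (U : list X) l : length l <= n -> (forall x, In x l -> In x U) ->
  In l (lists_upto n U).
Proof.
  revert l; induction n as [|n IH]; intros [|x l] Hl Hin; simpl in *; auto; try lia.
  right. apply in_flat_map. exists x. split; auto. apply in_map. apply IH; auto. lia.
Qed.

Section Fin.
Variables (Cs Ps : list nat) (Ar : nat).

Definition wf_atom (a : atom) := good_atom Cs a /\ In (apred a) Ps /\ length (aargs a) <= Ar.
Definition wf_goal (g : goal) := Forall wf_atom g.

Lemma wf_asubst th a : (forall x, good_term Cs (th x)) -> wf_atom a -> wf_atom (asubst th a).
Proof.
  intros H [H1 [H2 H3]]. split; [apply good_asubst; auto|]. unfold asubst; simpl.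
  rewrite length_map; auto.
Qed.

Lemma wf_gsubst th g : (forall x, good_term Cs (th x)) -> wf_goal g -> wf_goal (gsubst th g).
Proof.
  intros H Hg. unfold wf_goal, gsubst in *. rewrite Forall_forall in *.
  intros a Ha. apply in_map_iff in Ha as [u [<- Hu]]. apply wf_asubst; auto.
Qed.

Lemma combine_in_seq (vs : list var) k x : In x vs ->
  exists i, In (x, i) (combine vs (seq k (length vs))) /\ i < k + length vs.
Proof.
  revert k; induction vs as [|v vs IH]; intros k Hx; simpl in *. contradiction.
  destruct Hx as [<-|Hx]. exists k; split; auto; lia.
  destruct (IH (S k) Hx) as [i [Hi Li]]. exists i; split; auto; lia.
Qed.

Lemma map_fst_combine_seq (vs : list var) k : map fst (combine vs (seq k (length vs))) = vs.
Proof. revert k; induction vs; simpl; intros; f_equal; auto. Qed.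
Lemma map_snd_combine_seq (vs : list var) k : map snd (combine vs (seq k (length vs))) = seq k (length vs).
Proof. revert k; induction vs; simpl; intros; f_equal; auto. Qed.

Lemma canren_ex (H : goal) : exists r : ren, forall x, In x (gvars H) ->
  rf r x < length (nodup Nat.eq_dec (gvars H)).
Proof.
  set (vs := nodup Nat.eq_dec (gvars H)).
  destruct (ren_extend (combine vs (seq 0 (length vs)))) as [r Hr].
  - rewrite map_fst_combine_seq. apply NoDup_nodup.
  - rewrite map_snd_combine_seq. apply seq_NoDup.
  - exists r. intros x Hx. assert (Hv : In x vs) by (apply nodup_In; auto).
    destruct (combine_in_seq vs 0 x Hv) as [i [Hi Li]]. apply Hr in Hi. simpl in Hi. rewrite Hi. simpl in Li. exact Li.
Qed.

Definition canren (H : goal) : ren := proj1_sig (constructive_indefinite_description _ (canren_ex H)).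
Lemma canren_spec H x : In x (gvars H) -> rf (canren H) x < length (nodup Nat.eq_dec (gvars H)).
Proof. unfold canren. destruct constructive_indefinite_description; simpl; auto. Qed.

Definition canon (H : goal) : goal := gsubst (rs (canren H)) H.

Definition termsU (M : nat) : list term := map Var (seq 0 M) ++ map (fun c => Fn c []) Cs.
Definition atomsU (M : nat) : list atom :=
  flat_map (fun p => map (mkAtom p) (lists_upto Ar (termsU M))) Ps.
Definition goalsU (L M : nat) : list goal := lists_upto L (atomsU M).

Lemma good_term_vars t : good_term Cs t -> length (tvars t) <= 1.
Proof. intros [[x ->]|[c [_ ->]]]; simpl; auto. Qed.

Lemma args_vars args : Forall (good_term Cs) args -> length (flat_map tvars args) <= length args.
Proof.
  induction args as [|t args IH]; intros Hf; simpl; auto. inversion Hf; subst.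
  rewrite length_app. pose proof (good_term_vars t H1). specialize (IH H2). lia.
Qed.

Lemma wf_goal_vars g : wf_goal g -> length (gvars g) <= length g * Ar.
Proof.
  induction g as [|a g IH]; intros Hg; simpl; auto. inversion Hg as [|? ? [Ha1 [_ Ha3]] Hg']; subst.
  rewrite length_app. specialize (IH Hg'). enough (length (avars a) <= Ar) by lia.
  unfold avars. pose proof (args_vars _ Ha1). lia.
Qed.

Lemma canon_in L H : wf_goal H -> length H <= L -> In (canon H) (goalsU L (L * Ar)).
Proof.
  intros Hw HL. unfold canon, goalsU. apply lists_upto_in.
  - unfold gsubst; rewrite length_map; auto.
  - intros b Hb. unfold gsubst in Hb. apply in_map_iff in Hb as [a [<- Ha]].
    destruct (proj1 (Forall_forall _ _) Hw a Ha) as [G1 [G2 G3]].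
    unfold atomsU. apply in_flat_map. exists (apred a). split; auto.
    unfold asubst. apply in_map. apply lists_upto_in. rewrite length_map; auto.
    intros t Ht. apply in_map_iff in Ht as [u [<- Hu]]. unfold good_atom in G1.
    rewrite Forall_forall in G1. destruct (G1 u Hu) as [[x ->]|[c [Hc ->]]]; simpl.
    + unfold termsU. apply in_app_iff; left. unfold rs. apply in_map. apply in_seq.
      assert (Hx : In x (gvars H)).
      { unfold gvars. apply in_flat_map. exists a. split; auto. unfold avars. apply in_flat_map.
        exists (Var x). split; simpl; auto. }
      pose proof (canren_spec H x Hx). pose proof (wf_goal_vars H Hw).
      pose proof (NoDup_incl_length (NoDup_nodup Nat.eq_dec (gvars H)) (l' := gvars H)
        (fun y Hy => proj1 (nodup_In _ _ _) Hy)).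
      assert (length H * Ar <= L * Ar) by (apply Nat.mul_le_mono_r; auto). split; [apply Nat.le_0_l|]. eapply Nat.lt_le_trans; [exact H0|]. eapply Nat.le_trans; [exact H2|]. eapply Nat.le_trans; [exact H1|exact H3].
    + unfold termsU. apply in_app_iff; right. apply in_map_iff. eauto.
Qed.

Lemma canon_eq H1 H2 : canon H1 = canon H2 -> exists r, H2 = gsubst (rs r) H1.
Proof.
  unfold canon. intros E. exists (rcomp (rinv (canren H2)) (canren H1)).
  rewrite <- rs_comp, <- gsubst_comp, E. rewrite gsubst_rinv. reflexivity.
Qed.

Lemma bounded_rep (Hs : nat -> goal) L :
  (forall j, wf_goal (Hs j)) ->
  (forall m, exists j, m <= j /\ length (Hs j) <= L) ->
  exists i j r, i < j /\ Hs j = gsubst (rs r) (Hs i).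
Proof.
  intros Hw Hinf.
  set (nx := fun m => proj1_sig (constructive_indefinite_description _ (Hinf m))).
  assert (Hnx : forall m, m <= nx m /\ length (Hs (nx m)) <= L).
  { intros m. unfold nx. destruct constructive_indefinite_description; simpl; auto. }
  set (idx := fix idx k := match k with 0 => nx 0 | S k => nx (S (idx k)) end).
  assert (Hmono : forall k1 k2, k1 < k2 -> idx k1 < idx k2).
  { intros k1 k2 Lt. induction Lt; simpl; pose proof (Hnx (S (idx k1))); try pose proof (Hnx (S (idx m))); lia. }
  assert (Hlen : forall k, length (Hs (idx k)) <= L).
  { intros [|k]; simpl; apply Hnx. }
  destruct (pigeon (goalsU L (L * Ar)) (fun k => canon (Hs (idx k)))) as [k1 [k2 [Lt E]]].
  { intros k. apply canon_in; auto. }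
  apply canon_eq in E as [r Er]. exists (idx k1), (idx k2), r. split; auto.
Qed.

End Fin.

Lemma combine_in_seq_gen (vs : list var) k x : In x vs ->
  exists i, In (x, i) (combine vs (seq k (length vs))) /\ k <= i < k + length vs.
Proof.
  revert k; induction vs as [|v vs IH]; intros k Hx; simpl in *. contradiction.
  destruct Hx as [<-|Hx]. exists k; split; auto; lia.
  destruct (IH (S k) Hx) as [i [Hi Li]]. exists i; split; auto; lia.
Qed.

Lemma cvars_csubst s c : cvars (csubst s c) = avars (asubst s (chead c)) ++ gvars (gsubst s (cbody c)).
Proof. reflexivity. Qed.

Lemma cvars_ren s r c y : In y (cvars (csubst (scomp (rs r) s) c)) <->
  exists x, In x (cvars (csubst s c)) /\ y = rf r x.
Proof.
  rewrite !cvars_csubst, !in_app_iff. rewrite <- asubst_comp, <- gsubst_comp.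
  rewrite avars_asubst, gvars_gsubst. unfold rs; simpl. split.
  - intros [[x [Hx [<-|[]]]]|[x [Hx [<-|[]]]]]; exists x; split; auto; apply in_app_iff; auto.
  - intros [x [Hx ->]]. apply in_app_iff in Hx as [Hx|Hx]; [left|right]; exists x; simpl; auto.
Qed.

Lemma renaming_comp r s : renaming s -> renaming (scomp (rs r) s).
Proof.
  intros Hs. destruct (renaming_ren s Hs) as [r' ->]. rewrite rs_comp. apply ren_renaming.
Qed.

Lemma res_vars G c xi th G' : resolvent G c xi th G' ->
  (forall y K, In y (gvars (gsubst th K)) ->
     In y (gvars K) \/ In y (gvars G) \/ In y (cvars (csubst xi c))) /\
  (forall y, In y (gvars G') -> In y (gvars G) \/ In y (cvars (csubst xi c))).
Proof.
  intros [Hxi [pre [a [post [EG [Hm [Hid [Hrel EG']]]]]]]].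
  assert (K1 : forall y K, In y (gvars (gsubst th K)) ->
     In y (gvars K) \/ In y (gvars G) \/ In y (cvars (csubst xi c))).
  { intros y K Hy. apply gvars_gsubst in Hy as [x [Hx Hy]].
    destruct (classic (th x = Var x)) as [E|E].
    - rewrite E in Hy. destruct Hy as [<-|[]]. auto.
    - destruct (Hrel x E) as [_ H2]. apply H2, in_app_iff in Hy as [Hy|Hy]; right.
      + right. rewrite cvars_csubst. apply in_app_iff; auto.
      + left. rewrite EG, gvars_app, gvars_cons. rewrite !in_app_iff; auto. }
  split; auto. intros y Hy. rewrite EG' in Hy. apply K1 in Hy as [Hy|Hy]; auto.
  rewrite !gvars_app, !in_app_iff in Hy. destruct Hy as [Hy|[Hy|Hy]].
  - left. rewrite EG, gvars_app, gvars_cons, !in_app_iff; auto.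
  - right. rewrite cvars_csubst, in_app_iff; auto.
  - left. rewrite EG, gvars_app, gvars_cons, !in_app_iff; auto.
Qed.

Lemma resolvent_conj G c xi th G' r : resolvent G c xi th G' ->
  resolvent (gsubst (rs r) G) c (scomp (rs r) xi) (conj r th) (gsubst (rs r) G').
Proof.
  intros [Hxi [pre [a [post [EG [Hm [Hid [Hrel EG']]]]]]]].
  split. apply renaming_comp; auto.
  exists (gsubst (rs r) pre), (asubst (rs r) a), (gsubst (rs r) post).
  rewrite <- asubst_comp. split; [|split; [|split; [|split]]].
  - rewrite EG, gsubst_app. reflexivity.
  - apply mgu_conj; auto.
  - apply idem_conj; auto.
  - apply relevant_conj; auto.
  - rewrite EG', <- conj_gsubst, !gsubst_app, <- gsubst_comp. reflexivity.
Qed.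

Lemma inst_len G0 th j : length (inst_upto G0 th j) = length G0.
Proof. induction j; simpl; auto. unfold gsubst; rewrite length_map; auto. Qed.

Lemma bounded_max (Q : nat -> Prop) m : (exists j, Q j /\ j < m) -> (forall j, Q j -> j < m) ->
  exists j, Q j /\ forall j', Q j' -> j' <= j.
Proof.
  induction m as [|m IH]; intros [j [Hj Lj]] Hb. lia.
  destruct (classic (Q m)) as [Qm|Qm].
  - exists m; split; auto. intros j' Hj'. specialize (Hb _ Hj'). lia.
  - apply IH. exists j; split; auto. assert (j <> m) by (intro; subst; auto). lia.
    intros j' Hj'. specialize (Hb _ Hj'). assert (j' <> m) by (intro; subst; auto). lia.
Qed.

Lemma pi_ex (sg : ren) (Av Vs : list var) (B : nat) :
  (forall x, In x Av -> rf sg x < B) -> (forall v, In v Vs -> ~ In v Av) ->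
  exists p : ren, (forall x, In x Av -> rf p x = rf sg x) /\
    (forall v, In v Vs -> B <= rf p v < B + length Vs).
Proof.
  intros HA HV. set (A' := nodup Nat.eq_dec Av). set (V' := nodup Nat.eq_dec Vs).
  destruct (ren_extend (map (fun a => (a, rf sg a)) A' ++ combine V' (seq B (length V')))) as [p Hp].
  - rewrite map_app, map_map. simpl. rewrite map_id, map_fst_combine_seq.
    apply NoDup_app; try apply NoDup_nodup. intros a Ha Hb.
    apply nodup_In in Ha, Hb. apply (HV a); auto.
  - rewrite map_app, map_map. simpl. rewrite map_snd_combine_seq. apply NoDup_app.
    + apply NoDup_map_NoDup_ForallPairs. intros a b _ _. apply ren_inj. apply NoDup_nodup.
    + apply seq_NoDup.
    + intros y Hy Hy'. apply in_map_iff in Hy as [a [<- Ha]]. apply in_seq in Hy'.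
      apply nodup_In in Ha. specialize (HA _ Ha). lia.
  - exists p. split.
    + intros x Hx. apply (Hp (x, rf sg x)). apply in_app_iff; left.
      apply in_map_iff. exists x; split; auto. apply nodup_In; auto.
    + intros v Hv. assert (Hv' : In v V') by (apply nodup_In; auto).
      destruct (combine_in_seq_gen V' B v Hv') as [i [Hi Li]].
      pose proof (Hp (v, i) (proj2 (in_app_iff _ _ _) (or_intror Hi))) as E. simpl in E.
      rewrite E. pose proof (NoDup_incl_length (NoDup_nodup Nat.eq_dec Vs) (l' := Vs)
        (fun y Hy => proj1 (nodup_In _ _ _) Hy)). fold V' in H. lia.
Qed.

Section Grow.
Variables (P : program) (G0 : goal).
Hypothesis Hyp : forall (Gs : nat -> goal) (c : nat -> clause) (xi th : nat -> subst),
      inf_SLD P G0 Gs c xi th -> EVR_L_prunes G0 th Gs.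
Variables (Gs : nat -> goal) (c : nat -> clause) (xi th : nat -> subst).
Hypothesis HS : inf_SLD P G0 Gs c xi th.
Hypothesis Hgrow : forall n, exists m, forall j, m <= j -> n < length (Gs j).

Let I j := inst_upto G0 th j.
Let V j := cvars (csubst (xi j) (c j)).
Let AV j := gvars (I j) ++ gvars (Gs j).

Lemma S_vars j x : In x (AV j) -> In x (gvars G0) \/ exists k, k < j /\ In x (V k).
Proof.
  induction j as [|j IH]; intros Hx; unfold AV in *; simpl in Hx.
  - destruct HS as [H0 _]. rewrite H0 in Hx. apply in_app_iff in Hx as [|]; auto.
  - destruct HS as [_ Hj]. destruct (Hj j) as [_ [_ Hr]]. destruct (res_vars _ _ _ _ _ Hr) as [K1 K2].
    apply in_app_iff in Hx as [Hx|Hx].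
    + apply K1 in Hx as [Hx|[Hx|Hx]].
      * destruct (IH (in_or_app _ _ _ (or_introl Hx))) as [|[k [Lk Hk]]]; [left; auto|right; exists k; split; [lia|auto]].
      * destruct (IH (in_or_app _ _ _ (or_intror Hx))) as [|[k [Lk Hk]]]; [left; auto|right; exists k; split; [lia|auto]].
      * right. exists j; split; auto.
    + apply K2 in Hx as [Hx|Hx].
      * destruct (IH (in_or_app _ _ _ (or_intror Hx))) as [|[k [Lk Hk]]]; [left; auto|right; exists k; split; [lia|auto]].
      * right. exists j; split; auto.
Qed.

Lemma V_disj j v : In v (V j) -> ~ In v (AV j).
Proof.
  intros Hv Ha. destruct HS as [_ Hj]. destruct (Hj j) as [_ [Hsa _]].
  destruct (Hsa v Hv) as [H1 H2]. apply S_vars in Ha as [Ha|[k [Lk Hk]]]; auto.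
  eapply H2; eauto.
Qed.

Definition rel j1 j2 := exists r, I j2 = gsubst (rs r) (I j1) /\ Gs j2 = gsubst (rs r) (Gs j1).

Lemma rel_refl j : rel j j.
Proof. exists rid. rewrite <- (gsubst_var (I j)) at 1. rewrite <- (gsubst_var (Gs j)) at 1. split; apply gsubst_ext; auto. Qed.

Lemma rel_trans j1 j2 j3 : rel j1 j2 -> rel j2 j3 -> rel j1 j3.
Proof.
  intros [r1 [E1 F1]] [r2 [E2 F2]]. exists (rcomp r2 r1).
  rewrite <- rs_comp, <- !gsubst_comp, <- E1, <- F1. auto.
Qed.

Lemma rel_len j1 j2 : rel j1 j2 -> length (Gs j1) = length (Gs j2).
Proof. intros [r [_ E]]. rewrite E. unfold gsubst. rewrite length_map. auto. Qed.

Lemma last_ex l : exists j, rel l j /\ forall j', rel l j' -> j' <= j.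
Proof.
  destruct (Hgrow (length (Gs l))) as [m Hm].
  apply bounded_max with (m := S (l + m)).
  - exists l; split. apply rel_refl. lia.
  - intros j Hj. apply rel_len in Hj. destruct (le_lt_dec m j) as [L|L]; [|lia].
    specialize (Hm j L). lia.
Qed.

Definition lastf l := proj1_sig (constructive_indefinite_description _ (last_ex l)).
Lemma lastf_spec l : rel l (lastf l) /\ forall j', rel l j' -> j' <= lastf l.
Proof. unfold lastf. destruct constructive_indefinite_description; simpl; auto. Qed.

Lemma lastf_ge l : l <= lastf l.
Proof. apply lastf_spec. apply rel_refl. Qed.

Definition relw l : ren := proj1_sig (constructive_indefinite_description _ (proj1 (lastf_spec l))).
Lemma relw_spec l : I (lastf l) = gsubst (rs (relw l)) (I l) /\ Gs (lastf l) = gsubst (rs (relw l)) (Gs l).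
Proof. unfold relw. destruct constructive_indefinite_description; simpl; auto. Qed.

Record st := mkst { sl : nat; ssig : ren; sB : nat }.

Lemma pi_ex' (s : st) : exists p : ren,
  ((forall x, In x (AV (sl s)) -> rf (ssig s) x < sB s) ->
   (forall x, In x (AV (sl s)) -> rf p x = rf (ssig s) x) /\
   (forall v, In v (V (sl s)) -> sB s <= rf p v < sB s + length (V (sl s)))).
Proof.
  destruct (classic (forall x, In x (AV (sl s)) -> rf (ssig s) x < sB s)) as [H|H].
  - destruct (pi_ex (ssig s) (AV (sl s)) (V (sl s)) (sB s) H) as [p Hp].
    + intros v Hv. apply V_disj; auto.
    + exists p; auto.
  - exists rid. intros H'. contradiction.
Qed.

Definition pif (s : st) : ren := proj1_sig (constructive_indefinite_description _ (pi_ex' s)).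
Lemma pif_spec s : (forall x, In x (AV (sl s)) -> rf (ssig s) x < sB s) ->
   (forall x, In x (AV (sl s)) -> rf (pif s) x = rf (ssig s) x) /\
   (forall v, In v (V (sl s)) -> sB s <= rf (pif s) v < sB s + length (V (sl s))).
Proof. unfold pif. destruct constructive_indefinite_description; simpl; auto. Qed.

Definition nextst (s : st) : st :=
  mkst (lastf (S (sl s))) (rcomp (pif s) (rinv (relw (S (sl s))))) (sB s + length (V (sl s))).

Definition st0 : st := mkst (lastf 0) (rinv (relw 0)) (S (list_max (gvars G0))).

Fixpoint stf (k : nat) : st := match k with 0 => st0 | S k => nextst (stf k) end.

Definition src k := match k with 0 => 0 | S k => S (sl (stf k)) end.
Lemma sl_src k : sl (stf k) = lastf (src k).
Proof. destruct k; reflexivity. Qed.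

Definition H' k := gsubst (rs (ssig (stf k))) (Gs (sl (stf k))).
Definition c' k := c (sl (stf k)).
Definition xi' k := scomp (rs (pif (stf k))) (xi (sl (stf k))).
Definition th' k := conj (pif (stf k)) (th (sl (stf k))).
Let I' k := inst_upto G0 th' k.

Lemma sB_mono k1 k2 : k1 <= k2 -> sB (stf k1) <= sB (stf k2).
Proof. induction 1; auto. simpl. lia. Qed.

Lemma sl_mono k : sl (stf k) < sl (stf (S k)).
Proof. simpl. pose proof (lastf_ge (S (sl (stf k)))). lia. Qed.

Lemma sl_mono' k1 k2 : k1 < k2 -> sl (stf k1) < sl (stf k2).
Proof. induction 1. apply sl_mono. pose proof (sl_mono m). lia. Qed.

Definition Inv k := I' k = gsubst (rs (ssig (stf k))) (I (sl (stf k))) /\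
  (forall y, In y (gvars (I' k) ++ gvars (H' k)) -> y < sB (stf k)).

Lemma pre_of_Inv k : Inv k -> forall x, In x (AV (sl (stf k))) -> rf (ssig (stf k)) x < sB (stf k).
Proof.
  intros [E Hb] x Hx. apply Hb. unfold AV in Hx. apply in_app_iff in Hx as [Hx|Hx]; apply in_app_iff.
  - left. rewrite E. apply gvars_ren; eauto.
  - right. unfold H'. apply gvars_ren; eauto.
Qed.

Lemma H'_pi k : Inv k -> H' k = gsubst (rs (pif (stf k))) (Gs (sl (stf k))).
Proof.
  intros Hk. destruct (pif_spec _ (pre_of_Inv k Hk)) as [Ha _]. unfold H'.
  apply gsubst_ext. intros x Hx. unfold rs. rewrite Ha; auto. unfold AV; apply in_app_iff; auto.
Qed.

Lemma I'_pi k : Inv k -> I' k = gsubst (rs (pif (stf k))) (I (sl (stf k))).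
Proof.
  intros Hk. destruct (pif_spec _ (pre_of_Inv k Hk)) as [Ha _]. rewrite (proj1 Hk).
  apply gsubst_ext. intros x Hx. unfold rs. rewrite Ha; auto. unfold AV; apply in_app_iff; auto.
Qed.

Lemma step_res k : Inv k -> resolvent (H' k) (c' k) (xi' k) (th' k)
   (gsubst (rs (pif (stf k))) (Gs (S (sl (stf k))))).
Proof.
  intros Hk. rewrite H'_pi; auto. apply resolvent_conj. destruct HS as [_ Hj]. apply Hj.
Qed.

Lemma H'_S k : Inv k -> H' (S k) = gsubst (rs (pif (stf k))) (Gs (S (sl (stf k)))).
Proof.
  intros Hk. unfold H'. simpl. rewrite (proj2 (relw_spec _)).
  rewrite <- rs_comp, <- gsubst_comp. f_equal. apply gsubst_rinv.
Qed.

Lemma I'_S k : Inv k -> I' (S k) = gsubst (rs (pif (stf k))) (I (S (sl (stf k)))).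
Proof.
  intros Hk. unfold I'. simpl. fold (I' k). rewrite I'_pi; auto. unfold th'.
  rewrite conj_gsubst. reflexivity.
Qed.

Lemma Inv_all k : Inv k.
Proof.
  induction k as [|k IH].
  - split.
    + unfold I'; simpl. pose proof (proj1 (relw_spec 0)) as E. rewrite E.
      rewrite gsubst_rinv. reflexivity.
    + intros y Hy. simpl. unfold I', H' in Hy. simpl in Hy. rewrite (proj2 (relw_spec 0)) in Hy.
      rewrite gsubst_rinv in Hy. destruct HS as [H0 _]. rewrite H0 in Hy.
      assert (In y (gvars G0)) by (apply in_app_iff in Hy as [|]; auto).
      pose proof (list_max_le (gvars G0) (list_max (gvars G0))) as [Hl _].
      specialize (Hl (le_n _)). rewrite Forall_forall in Hl. specialize (Hl y H). lia.
  - split.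
    + rewrite I'_S; auto. simpl. rewrite (proj1 (relw_spec _)).
      rewrite <- rs_comp, <- gsubst_comp, gsubst_rinv. reflexivity.
    + destruct (pif_spec _ (pre_of_Inv k IH)) as [Ha Hv].
      intros y Hy. rewrite I'_S, H'_S in Hy; auto. rewrite <- gvars_app, <- gsubst_app in Hy.
      apply gvars_ren in Hy as [x [Hx ->]]. rewrite gvars_app in Hx.
      destruct HS as [_ Hj]. destruct (Hj (sl (stf k))) as [_ [_ Hr]].
      destruct (res_vars _ _ _ _ _ Hr) as [K1 K2].
      assert (Hx' : In x (AV (sl (stf k))) \/ In x (V (sl (stf k)))).
      { apply in_app_iff in Hx as [Hx|Hx].
        - simpl in Hx. apply K1 in Hx as [Hx|[Hx|Hx]]; unfold AV; auto using in_or_app.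
        - apply K2 in Hx as [Hx|Hx]; unfold AV; auto using in_or_app. }
      simpl. destruct Hx' as [Hx'|Hx'].
      * rewrite Ha; auto. pose proof (pre_of_Inv k IH x Hx'). lia.
      * specialize (Hv x Hx'). lia.
Qed.

Lemma Dstar_SLD : inf_SLD P G0 H' c' xi' th'.
Proof.
  split.
  - unfold H'. simpl. rewrite (proj2 (relw_spec 0)). rewrite gsubst_rinv. apply HS.
  - intros k. split; [|split].
    + unfold c'. apply HS.
    + intros x Hx. unfold xi', c' in Hx. apply cvars_ren in Hx as [x0 [Hx0 ->]].
      destruct (pif_spec _ (pre_of_Inv k (Inv_all k))) as [_ Hv].
      pose proof (Hv x0 Hx0) as Lx. split.
      * intros Hg. pose proof (sB_mono 0 k (Nat.le_0_l _)) as L0. simpl in L0.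
        pose proof (list_max_le (gvars G0) (list_max (gvars G0))) as [Hl _].
        specialize (Hl (le_n _)). rewrite Forall_forall in Hl. specialize (Hl _ Hg). lia.
      * intros k' Lk' Hin. unfold xi', c' in Hin. apply cvars_ren in Hin as [x1 [Hx1 E]].
        destruct (pif_spec _ (pre_of_Inv k' (Inv_all k'))) as [_ Hv'].
        pose proof (Hv' x1 Hx1) as Lx1. pose proof (sB_mono (S k') k Lk') as Lb. simpl in Lb.
        rewrite <- E in Lx1. lia.
    + pose proof (step_res k (Inv_all k)) as R. rewrite <- H'_S in R by apply Inv_all. exact R.
Qed.

Lemma grow_false : False.
Proof.
  destruct (Hyp _ _ _ _ Dstar_SLD) as [i [j [tau [Lij [Htau [EI EH]]]]]].
  destruct (renaming_ren _ Htau) as [t ->].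
  destruct (Inv_all i) as [Ei _]. destruct (Inv_all j) as [Ej _].
  assert (R : rel (sl (stf i)) (sl (stf j))).
  { exists (rcomp (rinv (ssig (stf j))) (rcomp t (ssig (stf i)))). split.
    - rewrite <- !rs_comp, <- !gsubst_comp. fold (I' i) (I' j) in EI.
      rewrite <- Ei, <- EI, Ej. rewrite gsubst_rinv. reflexivity.
    - rewrite <- !rs_comp, <- !gsubst_comp. unfold H' in EH. rewrite <- EH. rewrite gsubst_rinv. reflexivity. }
  pose proof (sl_mono' i j Lij) as Lsl.
  rewrite sl_src in R at 1. rewrite (sl_src i) in Lsl.
  pose proof (proj2 (lastf_spec (src i)) (sl (stf j))) as Hm.
  assert (rel (src i) (sl (stf j))) as R2.
  { eapply rel_trans; [apply lastf_spec|exact R]. }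
  specialize (Hm R2). lia.
Qed.

End Grow.

Inductive subl : goal -> goal -> Prop :=
| subl_nil : subl [] []
| subl_keep a N G : subl N G -> subl (a :: N) (a :: G)
| subl_drop a N G : subl N G -> subl N (a :: G).

Lemma sublist_subl N G D : sublist N G D -> subl N G.
Proof. induction 1; constructor; auto. Qed.

Lemma subl_refl G : subl G G.
Proof. induction G; constructor; auto. Qed.

Lemma subl_trans A B C : subl A B -> subl B C -> subl A C.
Proof.
  intros H1 H2. revert A H1. induction H2; intros A0 H1.
  - auto.
  - inversion H1; subst; constructor; auto.
  - constructor; auto.
Qed.

Lemma subl_app a b c d : subl a b -> subl c d -> subl (a ++ c) (b ++ d).
Proof. induction 1; intros; simpl; try constructor; auto. Qed.

Lemma subl_map s a b : subl a b -> subl (gsubst s a) (gsubst s b).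
Proof. induction 1; simpl; constructor; auto. Qed.

Lemma subl_length a b : subl a b -> length a <= length b.
Proof. induction 1; simpl; lia. Qed.

Lemma subl_in a b x : subl a b -> In x a -> In x b.
Proof. induction 1; simpl; intuition. Qed.

Lemma subl_split pre a post G : subl (pre ++ a :: post) G ->
  exists pre' post', G = pre' ++ a :: post' /\ subl pre pre' /\ subl post post'.
Proof.
  intros H. remember (pre ++ a :: post) as N. revert pre HeqN. induction H; intros pre E.
  - destruct pre; discriminate.
  - destruct pre as [|b pre]; simpl in E; injection E as E1 E2; subst.
    + exists [], G. split; auto. split; [constructor|auto].
    + destruct (IHsubl pre eq_refl) as [pre' [post' [-> [H1 H2]]]].
      exists (b :: pre'), post'. split; auto. split; [constructor|]; auto.
  - destruct (IHsubl pre E) as [pre' [post' [-> [H1 H2]]]].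
    exists (a0 :: pre'), post'. split; auto. split; [constructor|]; auto.
Qed.

Section RSLD.
Variables (P : program) (G0 : goal).
Variables (Gs Ns : nat -> goal) (al : nat -> subst) (c : nat -> clause) (xi th : nat -> subst).
Hypothesis HR : inf_RSLD P G0 Gs Ns al c xi th.

Lemma NsG j : subl (Ns j) (Gs j).
Proof. destruct HR as [_ H]. destruct (H j) as [[D [HD _]] _]. eapply sublist_subl; eauto. Qed.

Lemma sim_step j G' : exists G'', subl (Gs j) G' ->
  resolvent G' (c j) (xi j) (th j) G'' /\ subl (Gs (S j)) G''.
Proof.
  destruct (classic (subl (Gs j) G')) as [Hs|Hs]; [|exists []; intros; contradiction].
  destruct HR as [_ H]. destruct (H j) as [_ [_ [_ [Hxi [pre [a [post [E [Hm [Hi [Hr E']]]]]]]]]]].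
  pose proof (subl_trans _ _ _ (NsG j) Hs) as Hs'. rewrite E in Hs'.
  apply subl_split in Hs' as [pre' [post' [EG [H1 H2]]]].
  exists (gsubst (th j) (pre' ++ gsubst (xi j) (cbody (c j)) ++ post')). intros _. split.
  - split; auto. exists pre', a, post'. auto.
  - rewrite E'. apply subl_map. apply subl_app; auto. apply subl_app; auto. apply subl_refl.
Qed.

Definition simstep j G' := proj1_sig (constructive_indefinite_description _ (sim_step j G')).
Lemma simstep_spec j G' : subl (Gs j) G' ->
  resolvent G' (c j) (xi j) (th j) (simstep j G') /\ subl (Gs (S j)) (simstep j G').
Proof. unfold simstep. destruct constructive_indefinite_description; simpl; auto. Qed.

Fixpoint simG j := match j with 0 => G0 | S j => simstep j (simG j) end.

Lemma simG_subl j : subl (Gs j) (simG j).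
Proof.
  induction j; simpl.
  - destruct HR as [H0 _]. rewrite H0. apply subl_refl.
  - apply simstep_spec; auto.
Qed.

Lemma sim_SLD : inf_SLD P G0 simG c xi th.
Proof.
  split; auto. intros j. destruct HR as [_ H]. destruct (H j) as [_ [Hc [Hsa _]]].
  split; auto. split; auto. apply simstep_spec, simG_subl.
Qed.

Lemma sim_len j : length (Ns j) <= length (simG j).
Proof. apply subl_length. eapply subl_trans. apply NsG. apply simG_subl. Qed.

End RSLD.

Definition consts_t (t : term) : list nat := match t with Fn f _ => [f] | _ => [] end.
Definition AllA (P : program) (G0 : goal) := G0 ++ flat_map (fun cl => chead cl :: cbody cl) P.
Definition CsOf P G0 := flat_map (fun a => flat_map consts_t (aargs a)) (AllA P G0).
Definition PsOf P G0 := map apred (AllA P G0).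
Definition ArOf P G0 := list_max (map (fun a => length (aargs a)) (AllA P G0)).

Lemma wf_of_ff P G0 a : In a (AllA P G0) -> ff_atom a -> wf_atom (CsOf P G0) (PsOf P G0) (ArOf P G0) a.
Proof.
  intros Hin Hff. split; [|split].
  - unfold good_atom. unfold ff_atom in Hff. rewrite Forall_forall in *. intros t Ht.
    specialize (Hff t Ht). destruct t as [x|f ts]; [left; eauto|]. simpl in Hff; subst.
    right. exists f. split; auto. unfold CsOf. apply in_flat_map. exists a. split; auto.
    apply in_flat_map. exists (Fn f []). simpl; auto.
  - unfold PsOf. apply in_map; auto.
  - unfold ArOf. pose proof (list_max_le (map (fun a => length (aargs a)) (AllA P G0))
      (list_max (map (fun a => length (aargs a)) (AllA P G0)))) as [Hl _].
    specialize (Hl (le_n _)). rewrite Forall_forall in Hl. apply Hl. apply in_map_iff; eauto.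
Qed.

Section Bounded.
Variables (P : program) (G0 : goal).
Hypothesis HP : ff_program P.
Hypothesis HG : ff_goal G0.
Variables (Gs Ns : nat -> goal) (al : nat -> subst) (c : nat -> clause) (xi th : nat -> subst).
Hypothesis HR : inf_RSLD P G0 Gs Ns al c xi th.
Let Cs := CsOf P G0.
Let Ps := PsOf P G0.
Let Ar := ArOf P G0.

Lemma wf_G0 : wf_goal Cs Ps Ar G0.
Proof.
  unfold wf_goal. rewrite Forall_forall. intros a Ha. apply wf_of_ff.
  unfold AllA; apply in_app_iff; auto. unfold ff_goal in HG. rewrite Forall_forall in HG. auto.
Qed.

Lemma wf_clause j : wf_atom Cs Ps Ar (chead (c j)) /\ wf_goal Cs Ps Ar (cbody (c j)).
Proof.
  destruct HR as [_ H]. destruct (H j) as [_ [Hc _]].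
  unfold ff_program in HP. rewrite Forall_forall in HP. destruct (HP _ Hc) as [Hh Hb].
  split.
  - apply wf_of_ff; auto. unfold AllA. apply in_app_iff; right. apply in_flat_map. exists (c j).
    simpl; auto.
  - unfold wf_goal. rewrite Forall_forall. intros a Ha. apply wf_of_ff.
    + unfold AllA. apply in_app_iff; right. apply in_flat_map. exists (c j). simpl; auto.
    + unfold ff_goal in Hb. rewrite Forall_forall in Hb. auto.
Qed.

Lemma wf_subl a b : subl a b -> wf_goal Cs Ps Ar b -> wf_goal Cs Ps Ar a.
Proof.
  intros H Hb. unfold wf_goal in *. rewrite Forall_forall in *. intros x Hx. apply Hb.
  eapply subl_in; eauto.
Qed.

Lemma wf_inv j : wf_goal Cs Ps Ar (Gs j) /\ wf_goal Cs Ps Ar (inst_upto G0 th j).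
Proof.
  induction j as [|j [IH1 IH2]].
  - destruct HR as [H0 _]. rewrite H0. split; apply wf_G0.
  - destruct HR as [_ H]. destruct (H j) as [_ [_ [_ [Hxi [pre [a [post [E [Hm [Hi [Hr E']]]]]]]]]]].
    pose proof (wf_subl _ _ (NsG P G0 Gs Ns al c xi th HR j) IH1) as HN.
    rewrite E in HN. unfold wf_goal in HN. rewrite Forall_app in HN. destruct HN as [Hpre HN].
    inversion HN as [|? ? Ha Hpost]; subst.
    destruct (renaming_ren _ Hxi) as [r Er].
    destruct (wf_clause j) as [Wh Wb].
    assert (Hg : forall x, good_term Cs (th j x)).
    { apply (mgu_good Cs (th j) (asubst (xi j) (chead (c j))) a); auto.
      - rewrite Er. apply good_asubst. intros; apply good_rs. apply Wh.
      - apply Ha. }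
    split.
    + rewrite E'. apply wf_gsubst; auto. unfold wf_goal. rewrite !Forall_app. split; auto. split; auto.
      rewrite Er. apply wf_gsubst; auto. intros; apply good_rs.
    + simpl. apply wf_gsubst; auto.
Qed.

Lemma bounded_case L : (forall m, exists j, m <= j /\ length (Ns j) <= L) -> EVR_L_prunes G0 th Ns.
Proof.
  intros Hinf.
  destruct (bounded_rep Cs Ps Ar (fun j => inst_upto G0 th j ++ Ns j) (length G0 + L)) as [i [j [r [Lij E]]]].
  - intros j. unfold wf_goal. rewrite Forall_app. split. apply wf_inv.
    apply (wf_subl _ _ (NsG P G0 Gs Ns al c xi th HR j)). apply wf_inv.
  - intros m. destruct (Hinf m) as [j [Hj Lj]]. exists j. split; auto. rewrite length_app, inst_len. lia.
  - rewrite gsubst_app in E. apply app_len_inv in E as [E1 E2].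
    + exists i, j, (rs r). split; auto. split. apply ren_renaming. auto.
    + unfold gsubst. rewrite length_map, !inst_len. auto.
Qed.

End Bounded.

Theorem theoremt1p2p1 (P : program) (G0 : goal) :
  ff_program P -> ff_goal G0 ->
  (forall (Gs : nat -> goal) (c : nat -> clause) (xi th : nat -> subst),
      inf_SLD P G0 Gs c xi th -> EVR_L_prunes G0 th Gs) ->
  forall (Gs Ns : nat -> goal) (al : nat -> subst) (c : nat -> clause)
         (xi th : nat -> subst),
    inf_RSLD P G0 Gs Ns al c xi th -> EVR_L_prunes G0 th Ns.
Proof.
  intros HP HG Hyp Gs Ns al c xi th HR.
  destruct (classic (exists L, forall m, exists j, m <= j /\ length (Ns j) <= L)) as [[L HL]|HL].
  - eapply bounded_case; eauto.
  - exfalso. apply (grow_false P G0 Hyp (simG P G0 Gs Ns al c xi th HR) c xi th).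
    + apply sim_SLD.
    + intros n. apply NNPP. intros Hn. apply HL. exists n. intros m. apply NNPP. intros Hm.
      apply Hn. exists m. intros j Hj. pose proof (sim_len P G0 Gs Ns al c xi th HR j).
      destruct (le_lt_dec (length (Ns j)) n) as [Ln|Ln]; [|lia].
      exfalso. apply Hm. eauto.
Qed.
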